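(* Let $\mathcal{G}=(I,E)$ be a finite, simple, undirected, connected graph, let $Q\in\mathbb{R}_+^{I\times I}$ with $Q_{ij}>0$ if $\{i,j\}\in E$ and $Q_{ij}=0$ otherwise, and let $\mathbf{q}\in\mathbb{R}_+^I$ be not identically zero. Let $\mathcal{M}_\mathcal{G}=(\vec E,\Phi)$ be the message digraph of $\mathcal{G}$ and define $\boldsymbol{\alpha}\in\mathbb{R}_+^{\vec E}$ by $\alpha_{hk}=q_k/Q_{kh}$ for every $hk\in\vec E$. Then, for every $ji\in\vec E$ belonging to a non-trivial strongly connected component of $\mathcal{M}_\mathcal{G}$, there exists $hk\in\vec E$ reachable from $ji$ in $\mathcal{M}_\mathcal{G}$ such that $\alpha_{hk}>0$.
   Context: The message digraph $\mathcal{M}_\mathcal{G}=(\vec E,\Phi)$ has node set $\vec E=\{ji:=(j,i):\{i,j\}\in E\}$ (ordered pairs of adjacent vertices) and arc set $\Phi=\{(ji,hk): \{i,j\},\{k,h\}\in E,\ i=h,\ j\neq k\}$, i.e. there is an arc from $ji$ to $ik$ whenever $\{i,j\},\{i,k\}\in E$ and $k\neq j$. In a digraph, $w$ is reachable from $v$ if there is a directed path (possibly of length $0$) from $v$ to $w$; a strongly connected component is a maximal induced subdigraph in which all nodes are mutually reachable, and it is non-trivial unless it consists of a single node without a self-loop. *)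

(* Defs.v *)
From HB Require Import structures.
From mathcomp Require Import all_boot all_order all_algebra.
Set Implicit Arguments. Unset Strict Implicit. Unset Printing Implicit Defensive.
Import Order.TTheory GRing.Theory Num.Theory.

Definition simple_graph (I : finType) (E : rel I) : Prop :=
  irreflexive E /\ symmetric E.

Definition graph_connected (I : finType) (E : rel I) : Prop :=
  forall i j : I, connect E i j.

(* Nodes of the message digraph: ordered pairs ji = (j, i) with {i,j} in E.
   The pair p = (j, i) is stored as p.1 = j, p.2 = i. *)
Definition msg_node (I : finType) (E : rel I) :=
  {p : I * I | E p.1 p.2}.

(* Arc (ji, hk) iff i = h and j != k  (with {k,h} in E automatic since
   hk is a node). *)
Definition msg_arc (I : finType) (E : rel I) : rel (msg_node E) :=
  fun u v => ((val u).2 == (val v).1) && ((val u).1 != (val v).2).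

Definition msg_reach (I : finType) (E : rel I) : rel (msg_node E) :=
  connect (@msg_arc I E).

Definition msg_scc (I : finType) (E : rel I) (x : msg_node E) :
  {set msg_node E} :=
  [set y | msg_reach x y && msg_reach y x].

Definition in_nontrivial_scc (I : finType) (E : rel I) (x : msg_node E) :
  bool := (1 < #|msg_scc x|)%N || msg_arc x x.

Definition msg_alpha (R : realFieldType) (I : finType) (E : rel I)
  (Q : I -> I -> R) (q : I -> R) (u : msg_node E) : R :=
  q (val u).2 / Q (val u).2 (val u).1.

(* Main.v *)
Require Import Defs.
From HB Require Import structures.
From mathcomp Require Import all_boot all_order all_algebra.
Import Order.TTheory GRing.Theory Num.Theory.
Local Open Scope ring_scope.

Lemma pred_of_connect (T : finType) (e : rel T) (y x : T) :
  connect e y x -> y != x -> exists z, connect e y z /\ e z x.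
Proof.
move=> /connectP [p Hp ->]; case/lastP: p Hp => [|p' b] Hp /=.
  by rewrite eqxx.
move=> _; rewrite rcons_path in Hp; case/andP: Hp => Hp' Hb.
exists (last y p'); split=> //; last by rewrite last_rcons.
by apply/connectP; exists p'.
Qed.

Theorem lemma5 (R : realFieldType) (I : finType) (E : rel I)
  (Q : I -> I -> R) (q : I -> R) :
  simple_graph E ->
  graph_connected E ->
  (forall i j : I, 0 <= Q i j) ->
  (forall i j : I, E i j -> 0 < Q i j) ->
  (forall i j : I, ~~ E i j -> Q i j = 0) ->
  (forall i : I, 0 <= q i) ->
  (exists i : I, q i != 0) ->
  forall ji : msg_node E, in_nontrivial_scc ji ->
    exists hk : msg_node E, msg_reach ji hk /\ 0 < msg_alpha Q q hk.
Proof.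
move=> [Eirr Esym] Econn Qge Qgt Q0 qge [v qv] x Hx.
have key : exists z, msg_reach x z /\ msg_arc z x.
  case/orP: Hx => [Hc | Hl]; last by exists x; split => //; exact: connect0.
  case/card_gt1P: Hc => [a [b [Ha Hb Hab]]].
  have [y Hy Hyx] : exists2 y, y \in msg_scc x & y != x.
    case: (eqVneq a x) => [Eax | Hax]; last by exists a.
    by exists b => //; rewrite -Eax eq_sym.
  move: Hy; rewrite inE => /andP [Hxy Hyx'].
  have [z [Hyz Hzx]] := (@pred_of_connect _ (@msg_arc I E) y x Hyx' Hyx).
  by exists z; split => //; exact: connect_trans Hxy Hyz.
have predr : forall y, msg_reach x y -> exists t, msg_reach x t /\ msg_arc t y.
  move=> y Hy; case: (eqVneq x y) => [<- // | Hxy].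
  have [t [Ht1 Ht2]] := (@pred_of_connect _ (@msg_arc I E) x y Hy Hxy).
  by exists t.
pose P w := exists y : msg_node E, msg_reach x y /\ (val y).2 = w.
have Px : P (val x).2 by exists x; split => //; exact: connect0.
have clos : forall a b, E a b -> P a -> P b.
  move=> a b Hab [y [Hy Hya]].
  case: (eqVneq (val y).1 b) => [Hyb | Hyb].
    have [t [Ht Hty]] := predr y Hy.
    exists t; split => //; move: Hty; rewrite /msg_arc => /andP [/eqP -> _].
    exact: Hyb.
  pose n : msg_node E := exist (fun p => E p.1 p.2) (a, b) Hab.
  exists n; split => //.
  apply: connect_trans Hy (connect1 _).
  by rewrite /msg_arc /= Hya eqxx Hyb.
have Pall : forall w, P w.
  move=> w; have /connectP [p Hp ->] := Econn (val x).2 w.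
  elim: p (val x).2 Px Hp => [|c p IH] s Ps //= /andP [Hsc Hp].
  by apply: IH Hp; exact: clos Hsc Ps.
have [y [Hy Hyv]] := Pall v.
exists y; split => //.
rewrite /msg_alpha Hyv; apply: divr_gt0.
  by rewrite lt_def qv qge.
apply: Qgt; rewrite -Hyv Esym; exact: (valP y).
Qed.
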